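(* With respect to the lexicographical product, $I_{even}\times\omega\cong I_{odd}$, $I_{odd}\times\omega\cong I_{even}$, and $I\times\omega\cong I$. Consequently $I_{even}\times\omega^2\cong I_{even}$ and $I_{odd}\times\omega^2\cong I_{odd}$.
   Context: For linear orders $X,Y$, $X\times Y$ is the lexicographical product (each point of $X$ replaced by a copy of $Y$). Ordinal exponents have their usual ordinal meaning, with $\omega^\omega=\sup_{n<\omega}\omega^n$; $kZ$ denotes $k$ consecutive copies of the order $Z$. The $\omega^*$-sum $\cdots+M_2+M_1$ has $M_{k+1}$ entirely to the left of $M_k$. For $n\ge 0$ let $L_n=\cdots+3\omega^{n+3}+2\omega^{n+2}+\omega^{n+1}+\omega^\omega$ (the $\omega^*$-sum whose $k$-th summand from the right, $k\ge1$, is $k\,\omega^{n+k}$, followed by $\omega^\omega$), and for $n\ge1$ let $L_{-n}=\cdots+(n+3)\omega^{3}+(n+2)\omega^{2}+(n+1)\omega+\omega^\omega$ (the $\omega^*$-sum whose $k$-th summand from the right is $(n+k)\omega^k$, followed by $\omega^\omega$). For orders $M_i$ ($i\in\mathbb{Z}$), $\cdots+M_{-1}+M_0+M_1+\cdots$ denotes the $\mathbb{Z}$-indexed ordered sum. Define \[ I_{even}=\cdots+L_{-2}+L_0+L_2+\cdots,\quad I_{odd}=\cdots+L_{-1}+L_1+L_3+\cdots,\quad I=\cdots+L_{-1}+L_0+L_1+\cdots, \] the $\mathbb{Z}$-sums of the $L_i$ over even $i$, odd $i$, and all $i$ respectively, in increasing order of index. *)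

(* Defs.v *)
From Stdlib Require Import Arith ZArith.

Record LO := mkLO { car : Type; lt : car -> car -> Prop }.

Definition iso (A B : LO) : Prop :=
  exists (f : car A -> car B) (g : car B -> car A),
    (forall x, g (f x) = x) /\ (forall y, f (g y) = y) /\
    (forall x y, lt A x y <-> lt B (f x) (f y)).

(* Lexicographic product X x Y: each point of X replaced by a copy of Y. *)
Definition prodLO (X Y : LO) : LO :=
  mkLO (car X * car Y)
       (fun p q => lt X (fst p) (fst q) \/ (fst p = fst q /\ lt Y (snd p) (snd q))).

Definition sumLO (I : LO) (M : car I -> LO) : LO :=
  mkLO {i : car I & car (M i)}
       (fun p q => lt I (projT1 p) (projT1 q) \/
          exists (i : car I) (x y : car (M i)),
            p = existT _ i x /\ q = existT _ i y /\ lt (M i) x y).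

Definition sum2 (A B : LO) : LO :=
  mkLO (car A + car B)
       (fun p q => match p, q with
                   | inl a, inl a' => lt A a a'
                   | inl _, inr _ => True
                   | inr _, inl _ => False
                   | inr b, inr b' => lt B b b'
                   end).

Definition finLO (k : nat) : LO :=
  mkLO {i : nat | i < k} (fun a b => proj1_sig a < proj1_sig b).

Definition omega : LO := mkLO nat Nat.lt.
Definition omega_star : LO := mkLO nat (fun a b => b < a).
Definition Zlo : LO := mkLO Z Z.lt.

(* Ordinal powers of omega via finitely supported functions (Cantor normal
   form coefficients), compared at the largest index where they differ. *)
Definition cnf_lt (f g : nat -> nat) : Prop :=
  exists i, f i < g i /\ forall j, i < j -> f j = g j.

Definition omega_pow (n : nat) : LO :=
  mkLO {f : nat -> nat | forall i, n <= i -> f i = 0}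
       (fun f g => cnf_lt (proj1_sig f) (proj1_sig g)).

Definition omega_omega : LO :=
  mkLO {f : nat -> nat | exists N, forall i, N <= i -> f i = 0}
       (fun f g => cnf_lt (proj1_sig f) (proj1_sig g)).

Definition copies (k : nat) (X : LO) : LO := prodLO (finLO k) X.

(* k-th summand from the right (k >= 1) of L_i:
   i = n >= 0 : k * omega^(n+k);  i = -n < 0 : (n+k) * omega^k. *)
Definition Lsummand (i : Z) (k : nat) : LO :=
  if Z.leb 0 i then copies k (omega_pow (Z.to_nat i + k))
  else copies (Z.to_nat (- i) + k) (omega_pow k).

(* L_i = ... + M_3 + M_2 + M_1 + omega^omega; index j of omega* carries M_(j+1). *)
Definition L (i : Z) : LO :=
  sum2 (sumLO omega_star (fun j => Lsummand i (S j))) omega_omega.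

Definition I_even : LO := sumLO Zlo (fun m => L (2 * m)%Z).
Definition I_odd : LO := sumLO Zlo (fun m => L (2 * m + 1)%Z).
Definition I_all : LO := sumLO Zlo L.

(* Main.v *)
Require Import Defs.
From Stdlib Require Import Arith ZArith Lia Setoid Classical FunctionalExtensionality ProofIrrelevance Eqdep ClassicalEpsilon.

Lemma iso_refl A : iso A A.
Proof. exists (fun x => x), (fun x => x). split; [|split]; intros; reflexivity. Qed.

Lemma iso_sym A B : iso A B -> iso B A.
Proof.
  intros [f [g [gf [fg hl]]]]. exists g, f. split; [|split]; auto.
  intros x y. rewrite (hl (g x) (g y)), !fg. reflexivity.
Qed.

Lemma iso_trans A B C : iso A B -> iso B C -> iso A C.
Proof.
  intros [f [g [gf [fg hl]]]] [f2 [g2 [gf2 [fg2 hl2]]]].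
  exists (fun x => f2 (f x)), (fun z => g (g2 z)). split; [|split].
  - intros; rewrite gf2, gf; auto.
  - intros; rewrite fg, fg2; auto.
  - intros x y. rewrite hl, hl2. reflexivity.
Qed.

Lemma iso_eq A B : A = B -> iso A B.
Proof. intros ->; apply iso_refl. Qed.

Definition trich (A : LO) := forall x y : car A, x = y \/ lt A x y \/ lt A y x.
Definition asym (A : LO) := forall x y : car A, lt A x y -> ~ lt A y x.

Lemma iso_mono A B (f : car A -> car B) (g : car B -> car A) :
  (forall x, g (f x) = x) -> (forall y, f (g y) = y) ->
  (forall x y, lt A x y -> lt B (f x) (f y)) -> trich A -> asym B -> iso A B.
Proof.
  intros gf fg mono tr as_. exists f, g. split; [|split]; auto.
  intros x y; split; [apply mono|]. intros H.
  destruct (tr x y) as [->|[H1|H1]]; auto.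
  - exfalso; exact (as_ _ _ H H).
  - exfalso; exact (as_ _ _ H (mono _ _ H1)).
Qed.

Lemma sig_ext {A} {P : A -> Prop} (x y : {a | P a}) : proj1_sig x = proj1_sig y -> x = y.
Proof. destruct x, y; simpl; intros ->; f_equal; apply proof_irrelevance. Qed.

Lemma cnf_asym f g : cnf_lt f g -> ~ cnf_lt g f.
Proof.
  intros [i [Hi Hi']] [j [Hj Hj']].
  destruct (lt_eq_lt_dec i j) as [[H|H]|H].
  - rewrite (Hi' j H) in Hj. lia.
  - subst; lia.
  - rewrite (Hj' i H) in Hi. lia.
Qed.

Lemma cnf_trich_aux f g N : (forall i, N <= i -> f i = g i) ->
  (forall i, f i = g i) \/ cnf_lt f g \/ cnf_lt g f.
Proof.
  revert f g; induction N as [|N IH]; intros f g H.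
  - left; intros; apply H; lia.
  - destruct (lt_eq_lt_dec (f N) (g N)) as [[c|c]|c].
    + right; left. exists N; split; [auto|]. intros j Hj; apply H; lia.
    + apply IH. intros i Hi. destruct (Nat.eq_dec i N); [subst; auto| apply H; lia]; fail.
    + right; right. exists N; split; [auto|]. intros j Hj; symmetry; apply H; lia.
Qed.

Lemma trich_pow n : trich (omega_pow n).
Proof.
  intros [f Hf] [g Hg]; simpl.
  destruct (cnf_trich_aux f g n) as [E|[E|E]]; auto.
  - intros i Hi; rewrite Hf, Hg; auto.
  - left; apply sig_ext; simpl; apply functional_extensionality; auto.
Qed.

Lemma trich_oo : trich omega_omega.
Proof.
  intros [f [N Hf]] [g [M Hg]]; simpl.
  destruct (cnf_trich_aux f g (N + M)) as [E|[E|E]]; auto.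
  - intros i Hi; rewrite Hf, Hg; auto; lia.
  - left; apply sig_ext; simpl; apply functional_extensionality; auto.
Qed.

Lemma asym_pow n : asym (omega_pow n).
Proof. intros x y; apply cnf_asym. Qed.
Lemma asym_oo : asym omega_omega.
Proof. intros x y; apply cnf_asym. Qed.

Lemma trich_omega : trich omega.
Proof. intros x y; simpl. destruct (lt_eq_lt_dec x y) as [[H|H]|H]; auto. Qed.

Lemma trich_fin k : trich (finLO k).
Proof.
  intros x y; simpl. destruct (lt_eq_lt_dec (proj1_sig x) (proj1_sig y)) as [[H|H]|H]; auto.
  left; apply sig_ext; auto.
Qed.

Lemma trich_prod A B : trich A -> trich B -> trich (prodLO A B).
Proof.
  intros TA TB [a b] [a' b']; simpl.
  destruct (TA a a') as [->|[H|H]]; auto.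
  destruct (TB b b') as [->|[H|H]]; auto.
Qed.

Lemma trich_sum2 A B : trich A -> trich B -> trich (sum2 A B).
Proof.
  intros TA TB [a|b] [a'|b']; simpl; auto.
  - destruct (TA a a') as [->|[H|H]]; auto.
  - destruct (TB b b') as [->|[H|H]]; auto.
Qed.

Lemma prod_cong A A' B B' : iso A A' -> iso B B' -> iso (prodLO A B) (prodLO A' B').
Proof.
  intros [f [g [gf [fg hl]]]] [f2 [g2 [gf2 [fg2 hl2]]]].
  exists (fun p => (f (fst p), f2 (snd p))), (fun p => (g (fst p), g2 (snd p))).
  split; [|split].
  - intros [a b]; simpl; rewrite gf, gf2; auto.
  - intros [a b]; simpl; rewrite fg, fg2; auto.
  - intros [a b] [a' b']; simpl. rewrite hl, hl2. split.
    + intros [H|[-> H]]; auto.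
    + intros [H|[E H]]; auto. right; split; auto.
      rewrite <- (gf a), <- (gf a'), E; auto.
Qed.

Lemma prod_assoc A B C : iso (prodLO (prodLO A B) C) (prodLO A (prodLO B C)).
Proof.
  exists (fun p => (fst (fst p), (snd (fst p), snd p))), (fun p => ((fst p, fst (snd p)), snd (snd p))).
  split; [|split].
  - intros [[a b] c]; auto.
  - intros [a [b c]]; auto.
  - intros [[a b] c] [[a' b'] c']; simpl. split.
    + intros [[H|[-> H]]|[E H]]; auto. inversion E; subst; auto.
    + intros [H|[-> [H|[-> H]]]]; auto.
Qed.

Lemma prod_sum2 A B C : iso (prodLO (sum2 A B) C) (sum2 (prodLO A C) (prodLO B C)).
Proof.
  exists (fun p => match fst p with inl a => inl (a, snd p) | inr b => inr (b, snd p) end).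
  exists (fun q => match q with inl p => (inl (fst p), snd p) | inr p => (inr (fst p), snd p) end).
  split; [|split].
  - intros [[a|b] c]; auto.
  - intros [[a c]|[b c]]; auto.
  - intros [[a|b] c] [[a'|b'] c']; simpl; split; try tauto;
      try (intros [H|[E H]]; [auto|]; inversion E; subst; auto; fail);
      try (intros [H|[E H]]; [auto|discriminate]; fail);
      try (intros [H|[-> H]]; auto; fail).
Qed.

Lemma sum2_cong A A' B B' : iso A A' -> iso B B' -> iso (sum2 A B) (sum2 A' B').
Proof.
  intros [f [g [gf [fg hl]]]] [f2 [g2 [gf2 [fg2 hl2]]]].
  exists (fun p => match p with inl a => inl (f a) | inr b => inr (f2 b) end).
  exists (fun p => match p with inl a => inl (g a) | inr b => inr (g2 b) end).
  split; [|split].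
  - intros [a|b]; rewrite ?gf, ?gf2; auto.
  - intros [a|b]; rewrite ?fg, ?fg2; auto.
  - intros [a|b] [a'|b']; simpl; auto; tauto.
Qed.

Lemma sum2_assoc A B C : iso (sum2 (sum2 A B) C) (sum2 A (sum2 B C)).
Proof.
  exists (fun p => match p with inl (inl a) => inl a | inl (inr b) => inr (inl b) | inr c => inr (inr c) end).
  exists (fun p => match p with inl a => inl (inl a) | inr (inl b) => inl (inr b) | inr (inr c) => inr c end).
  split; [|split].
  - intros [[a|b]|c]; auto.
  - intros [a|[b|c]]; auto.
  - intros [[a|b]|c] [[a'|b']|c']; simpl; tauto.
Qed.

Lemma sum_lt_same I M i (x y : car (M i)) :
  lt (sumLO I M) (existT _ i x) (existT _ i y) <-> lt I i i \/ lt (M i) x y.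
Proof.
  simpl. split.
  - intros [H|[k [x' [y' [E1 [E2 H]]]]]]; [now left|right].
    assert (i = k) by (apply (f_equal (@projT1 _ _)) in E1; exact E1). subst k.
    apply inj_pair2 in E1; apply inj_pair2 in E2; subst; exact H.
  - intros [H|H]; [now left|right]. exists i, x, y; auto.
Qed.

Lemma sum_lt_diff I M i j (x : car (M i)) (y : car (M j)) : i <> j ->
  (lt (sumLO I M) (existT _ i x) (existT _ j y) <-> lt I i j).
Proof.
  intros D. simpl. split.
  - intros [H|[k [x' [y' [E1 [E2 H]]]]]]; auto.
    apply (f_equal (@projT1 _ _)) in E1; apply (f_equal (@projT1 _ _)) in E2; simpl in *.
    congruence.
  - auto.
Qed.

Definition isoT (A B : LO) : Type := {f : car A -> car B & {g : car B -> car A |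
  (forall x, g (f x) = x) /\ (forall y, f (g y) = y) /\ (forall x y, lt A x y <-> lt B (f x) (f y))}}.
Lemma iso_isoT A B : iso A B -> isoT A B.
Proof.
  intros H. apply constructive_indefinite_description in H. destruct H as [f H].
  apply constructive_indefinite_description in H. destruct H as [g H]. exists f, g. exact H.
Qed.

Lemma sumLO_cong I M N : (forall i, iso (M i) (N i)) -> iso (sumLO I M) (sumLO I N).
Proof.
  intros H.
  assert (T : forall i, isoT (M i) (N i)) by (intros; apply iso_isoT; auto).
  exists (fun p => existT (fun i => car (N i)) (projT1 p) (projT1 (T (projT1 p)) (projT2 p))).
  exists (fun q => existT (fun i => car (M i)) (projT1 q) (proj1_sig (projT2 (T (projT1 q))) (projT2 q))).
  split; [|split].
  - intros [i x]; simpl. destruct (T i) as [f [g [gf [fg hl]]]]; simpl; rewrite gf; reflexivity.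
  - intros [i x]; simpl. destruct (T i) as [f [g [gf [fg hl]]]]; simpl; rewrite fg; reflexivity.
  - intros [i x] [j y]. cbn [projT1 projT2].
    destruct (classic (i = j)) as [E|E].
    + subst j. rewrite !sum_lt_same. destruct (T i) as [f [g [gf [fg hl]]]]; simpl. rewrite hl; tauto.
    + rewrite !sum_lt_diff by auto. tauto.
Qed.

Lemma prod_sumLO I M C : iso (prodLO (sumLO I M) C) (sumLO I (fun i => prodLO (M i) C)).
Proof.
  exists (fun p => existT (fun i => car (prodLO (M i) C)) (projT1 (fst p)) (projT2 (fst p), snd p)).
  exists (fun q => (existT (fun i => car (M i)) (projT1 q) (fst (projT2 q)), snd (projT2 q))).
  split; [|split].
  - intros [[i x] c]; reflexivity.
  - intros [i [x c]]; reflexivity.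
  - intros [[i x] c] [[j y] d]. cbn [projT1 projT2 fst snd].
    change (lt (prodLO (sumLO I M) C) (existT _ i x, c) (existT _ j y, d)) with
      (lt (sumLO I M) (existT _ i x) (existT _ j y) \/ (existT (fun i => car (M i)) i x = existT _ j y /\ lt C c d)).
    destruct (classic (i = j)) as [E|E].
    + subst j. rewrite !sum_lt_same. simpl.
      assert (EE : existT (fun i => car (M i)) i x = existT _ i y <-> x = y)
        by (split; [apply inj_pair2| intros ->; auto]).
      rewrite EE. tauto.
    + rewrite !sum_lt_diff by auto.
      assert (EE : existT (fun i => car (M i)) i x = existT _ j y -> False)
        by (intros H; apply (f_equal (@projT1 _ _)) in H; auto).
      tauto.
Qed.

Lemma existT_rect_r {A} (P : A -> Type) a b (e : a = b) (y : P b) :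
  existT P a (eq_rect_r P y e) = existT P b y.
Proof. destruct e. reflexivity. Qed.

Lemma existT_aux {A B} (h : A -> B) (P : B -> Type) a i (e1 : a = i) (e2 : h a = h i) (x : P (h i)) :
  existT (fun k => P (h k)) a (eq_rect_r P x e2) = existT (fun k => P (h k)) i x.
Proof. subst a. rewrite (UIP_refl _ _ e2). reflexivity. Qed.

Lemma sumLO_reindex I J (h : car I -> car J) (h' : car J -> car I) (N : car J -> LO) :
  (forall i, h' (h i) = i) -> (forall j, h (h' j) = j) -> (forall i i', lt I i i' <-> lt J (h i) (h i')) ->
  iso (sumLO I (fun i => N (h i))) (sumLO J N).
Proof.
  intros h'h hh' hl.
  exists (fun p => existT (fun j => car (N j)) (h (projT1 p)) (projT2 p)).
  exists (fun q => existT (fun i => car (N (h i))) (h' (projT1 q))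
                     (eq_rect_r (fun j => car (N j)) (projT2 q) (hh' (projT1 q)))).
  split; [|split].
  - intros [i x]; cbn [projT1 projT2]. apply (existT_aux h (fun j => car (N j))). apply h'h.
  - intros [j y]; cbn [projT1 projT2]. apply existT_rect_r.
  - intros [i x] [j y]. cbn [projT1 projT2].
    destruct (classic (i = j)) as [E|E].
    + subst j. rewrite (sum_lt_same J N (h i)).
      rewrite (sum_lt_same I (fun i => N (h i)) i). rewrite hl. tauto.
    + rewrite (sum_lt_diff J N (h i) (h j)).
      * rewrite (sum_lt_diff I (fun i => N (h i)) i j) by auto. apply hl.
      * intros H; apply E; rewrite <- (h'h i), <- (h'h j), H; auto.
Qed.

Lemma sumLO_split M : iso (sumLO omega_star M) (sum2 (sumLO omega_star (fun j => M (S j))) (M 0)).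
Proof.
  exists (fun p => match p with existT _ n x =>
    (match n return car (M n) -> car (sum2 (sumLO omega_star (fun j => M (S j))) (M 0)) with
     | 0 => fun x => inr x
     | S j => fun x => inl (existT (fun j => car (M (S j))) j x) end) x end).
  exists (fun q => match q with inl p => existT (fun n => car (M n)) (S (projT1 p)) (projT2 p)
                          | inr x => existT (fun n => car (M n)) 0 x end).
  split; [|split].
  - intros [[|j] x]; reflexivity.
  - intros [[j x]|x]; reflexivity.
  - intros [[|j] x] [[|j'] y]; cbv beta iota.
    + rewrite sum_lt_same. change (lt (sum2 _ (M 0)) (inr x) (inr y)) with (lt (M 0) x y).
      simpl (lt omega_star _ _). intuition lia.
    + rewrite sum_lt_diff by discriminate. simpl. lia.
    + rewrite sum_lt_diff by discriminate. simpl. lia.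
    + change (lt (sum2 _ _) (inl ?a) (inl ?b)) with (lt (sumLO omega_star (fun j => M (S j))) a b).
      destruct (classic (j = j')) as [E|E].
      * subst j'. rewrite !sum_lt_same. simpl (lt omega_star _ _). intuition lia.
      * rewrite !sum_lt_diff by congruence. simpl. lia.
Qed.

Definition shiftf (f : nat -> nat) (a : nat) : nat -> nat :=
  fun i => match i with 0 => a | S i' => f i' end.

Lemma shiftf_pow n (f : car (omega_pow n)) a : forall i, S n <= i -> shiftf (proj1_sig f) a i = 0.
Proof. intros [|i] H; simpl; [lia|]. apply (proj2_sig f); lia. Qed.

Lemma unshift_pow n (g : car (omega_pow (S n))) : forall i, n <= i -> proj1_sig g (S i) = 0.
Proof. intros i H. apply (proj2_sig g); lia. Qed.

Lemma pow_succ n : iso (prodLO (omega_pow n) omega) (omega_pow (S n)).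
Proof.
  apply (iso_mono (prodLO (omega_pow n) omega) (omega_pow (S n))
    (fun p : car (omega_pow n) * nat => exist _ (shiftf (proj1_sig (fst p)) (snd p)) (shiftf_pow n (fst p) (snd p))
       : car (omega_pow (S n)))
    (fun g : car (omega_pow (S n)) => (exist _ (fun i => proj1_sig g (S i)) (unshift_pow n g) : car (omega_pow n), proj1_sig g 0))).
  - intros [f a]; simpl. f_equal. apply sig_ext; reflexivity.
  - intros g. apply sig_ext; simpl. apply functional_extensionality; intros [|i]; reflexivity.
  - intros [f a] [f' a']; simpl. intros [[i [H1 H2]]|[-> H]].
    + exists (S i); split; [auto|]. intros [|j] Hj; [lia|simpl; apply H2; lia].
    + exists 0; split; [auto|]. intros [|j] Hj; [lia|reflexivity].
  - apply trich_prod; [apply trich_pow|apply trich_omega].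
  - apply asym_pow.
Qed.

Lemma shiftf_oo (f : car omega_omega) a : exists N, forall i, N <= i -> shiftf (proj1_sig f) a i = 0.
Proof.
  destruct (proj2_sig f) as [N HN]. exists (S N). intros [|i] H; simpl; [lia|]. apply HN; lia.
Qed.

Lemma unshift_oo (g : car omega_omega) : exists N, forall i, N <= i -> proj1_sig g (S i) = 0.
Proof. destruct (proj2_sig g) as [N HN]. exists N. intros i H. apply HN; lia. Qed.

Lemma oo_succ : iso (prodLO omega_omega omega) omega_omega.
Proof.
  apply (iso_mono (prodLO omega_omega omega) omega_omega
    (fun p : car omega_omega * nat => exist _ (shiftf (proj1_sig (fst p)) (snd p)) (shiftf_oo (fst p) (snd p))
       : car omega_omega)
    (fun g : car omega_omega => (exist _ (fun i => proj1_sig g (S i)) (unshift_oo g) : car omega_omega, proj1_sig g 0))).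
  - intros [f a]; simpl. f_equal. apply sig_ext; reflexivity.
  - intros g. apply sig_ext; simpl. apply functional_extensionality; intros [|i]; reflexivity.
  - intros [f a] [f' a']; simpl. intros [[i [H1 H2]]|[-> H]].
    + exists (S i); split; [auto|]. intros [|j] Hj; [lia|simpl; apply H2; lia].
    + exists 0; split; [auto|]. intros [|j] Hj; [lia|reflexivity].
  - apply trich_prod; [apply trich_oo|apply trich_omega].
  - apply asym_oo.
Qed.

Lemma zero_pow1 a : forall i, 1 <= i -> shiftf (fun _ => 0) a i = 0.
Proof. intros [|i] H; simpl; [lia|reflexivity]. Qed.

Lemma omega_pow1 : iso omega (omega_pow 1).
Proof.
  apply (iso_mono omega (omega_pow 1) (fun a : nat => exist _ (shiftf (fun _ => 0) a) (zero_pow1 a) : car (omega_pow 1))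
                      (fun g : car (omega_pow 1) => proj1_sig g 0)).
  - intros a; reflexivity.
  - intros g; apply sig_ext; simpl; apply functional_extensionality; intros [|i]; simpl; auto.
    symmetry; apply (proj2_sig g); lia.
  - intros a b H. exists 0; split; [exact H|]. intros [|j] Hj; [lia|reflexivity].
  - apply trich_omega.
  - apply asym_pow.
Qed.

Lemma pow2_prod X : iso (prodLO X (omega_pow 2)) (prodLO (prodLO X omega) omega).
Proof.
  eapply iso_trans; [|apply iso_sym, prod_assoc].
  apply prod_cong; [apply iso_refl|].
  apply iso_sym. eapply iso_trans; [|apply pow_succ].
  apply prod_cong; [apply omega_pow1|apply iso_refl].
Qed.

Definition small (h : nat -> nat) := forall i, 2 <= i -> h i = 0.
Definition sdec (h : nat -> nat) : {small h} + {~ small h} := excluded_middle_informative (small h).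
Definition addc (c : nat) (h : nat -> nat) : nat -> nat := fun i => if Nat.eqb i 1 then h i + c else h i.
Definition subc (c : nat) (h : nat -> nat) : nat -> nat := fun i => if Nat.eqb i 1 then h i - c else h i.
Definition sh2 (a b : nat) : nat -> nat := shiftf (shiftf (fun _ => 0) a) b.

Lemma bound_sh2 a b : exists N, forall i, N <= i -> sh2 a b i = 0.
Proof. exists 2; intros [|[|i]] H; simpl; [lia|lia|reflexivity]. Qed.
Lemma small_sh2 a b : small (sh2 a b).
Proof. intros [|[|i]] H; simpl; [lia|lia|reflexivity]. Qed.

Lemma bound_addc c (g : car omega_omega) : exists N, forall i, N <= i -> addc c (proj1_sig g) i = 0.
Proof.
  destruct (proj2_sig g) as [N HN]. exists (N + 2). intros i Hi. unfold addc.
  destruct (Nat.eqb_spec i 1); [lia|]. apply HN; lia.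
Qed.
Lemma bound_subc c (g : car omega_omega) : exists N, forall i, N <= i -> subc c (proj1_sig g) i = 0.
Proof.
  destruct (proj2_sig g) as [N HN]. exists (N + 2). intros i Hi. unfold subc.
  destruct (Nat.eqb_spec i 1); [lia|]. apply HN; lia.
Qed.
Lemma small_addc c h : small h -> small (addc c h).
Proof. intros s i Hi. unfold addc. destruct (Nat.eqb_spec i 1); [lia|]. apply s; auto. Qed.
Lemma small_subc c h : small h -> small (subc c h).
Proof. intros s i Hi. unfold subc. destruct (Nat.eqb_spec i 1); [lia|]. apply s; auto. Qed.

Lemma small_lt (h g : car omega_omega) : small (proj1_sig h) -> ~ small (proj1_sig g) ->
  cnf_lt (proj1_sig h) (proj1_sig g).
Proof.
  intros sh ng. destruct (proj2_sig h) as [N HN]. destruct (proj2_sig g) as [M HM].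
  destruct (cnf_trich_aux (proj1_sig h) (proj1_sig g) (N + M)) as [E|[H|[i [H1 H2]]]]; auto.
  - intros i Hi; rewrite HN, HM; auto; lia.
  - exfalso; apply ng; intros i Hi; rewrite <- E; apply sh; auto.
  - exfalso. destruct (le_lt_dec 2 i).
    + rewrite (sh i) in H1; auto; lia.
    + apply ng; intros j Hj. rewrite H2 by lia. apply sh; auto.
Qed.

Section Absorb.
Variable c : nat.
Let A := sum2 (copies c (omega_pow 1)) omega_omega.

Definition absF (x : car A) : car omega_omega :=
  match x with
  | inl (t, f) => exist _ (sh2 (proj1_sig t) (proj1_sig f 0)) (bound_sh2 _ _)
  | inr g => if sdec (proj1_sig g) then exist _ (addc c (proj1_sig g)) (bound_addc c g) else g
  end.

Definition absG (h : car omega_omega) : car A :=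
  if sdec (proj1_sig h) then
    match lt_dec (proj1_sig h 1) c with
    | left H => inl (exist (fun i => i < c) (proj1_sig h 1) H,
                     exist _ (shiftf (fun _ => 0) (proj1_sig h 0)) (zero_pow1 _))
    | right _ => inr (exist _ (subc c (proj1_sig h)) (bound_subc c h))
    end
  else inr h.

Lemma absorb : iso A omega_omega.
Proof.
  apply (iso_mono A omega_omega absF absG).
  - intros [[t f]|g].
    + unfold absF, absG; simpl proj1_sig.
      destruct (sdec _) as [s|ns]; [|exfalso; apply ns, small_sh2].
      destruct (lt_dec _ c) as [l|nl].
      * replace (exist (fun i => i < c) (proj1_sig t) l) with t by (apply sig_ext; reflexivity).
        replace (exist _ (shiftf (fun _ => 0) (proj1_sig f 0)) (zero_pow1 _) : car (omega_pow 1)) with f;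
          [reflexivity|].
        apply sig_ext; simpl.
        apply functional_extensionality; intros [|i]; simpl; auto.
        apply (proj2_sig f); lia.
      * exfalso; apply nl. simpl. apply (proj2_sig t).
    + unfold absF. destruct (sdec (proj1_sig g)) as [s|ns].
      * unfold absG; simpl proj1_sig.
        destruct (sdec _) as [s'|ns']; [|exfalso; apply ns', small_addc, s].
        destruct (lt_dec _ c) as [l|nl].
        -- exfalso. unfold addc in l; simpl in l. lia.
        -- apply (f_equal (@inr (car (copies c (omega_pow 1))) (car omega_omega))).
           apply sig_ext; simpl. apply functional_extensionality; intros i.
           unfold subc, addc. destruct (Nat.eqb i 1); lia.
      * unfold absG. destruct (sdec (proj1_sig g)); [contradiction|reflexivity].
  - intros h. unfold absG. destruct (sdec (proj1_sig h)) as [s|ns].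
    + destruct (lt_dec _ c) as [l|nl].
      * apply sig_ext; simpl. apply functional_extensionality; intros [|[|i]]; simpl; auto.
        symmetry; apply s; lia.
      * unfold absF; simpl proj1_sig.
        destruct (sdec _) as [s'|ns']; [|exfalso; apply ns', small_subc, s].
        apply sig_ext; simpl. apply functional_extensionality; intros i.
        unfold subc, addc. destruct (Nat.eqb_spec i 1); [subst; lia|reflexivity].
    + unfold absF. destruct (sdec (proj1_sig h)); [contradiction|reflexivity].
  - intros [[t f]|g] [[t' f']|g']; simpl lt; intros H.
    + unfold absF; simpl. destruct H as [H|[E [i [H1 H2]]]].
      * exists 1; split; [simpl; exact H|]. intros [|[|j]] Hj; simpl; [lia|lia|reflexivity].
      * subst t'. assert (i = 0).
        { destruct i; auto. rewrite (proj2_sig f (S i)), (proj2_sig f' (S i)) in H1 by lia. lia. }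
        subst i. exists 0; split; [simpl; exact H1|]. intros [|[|j]] Hj; simpl; [lia|reflexivity|reflexivity].
    + unfold absF. destruct (sdec (proj1_sig g')) as [s|ns].
      * simpl. exists 1; split.
        -- unfold addc; simpl. pose proof (proj2_sig t); simpl in *; lia.
        -- intros [|[|j]] Hj; [lia|lia|]. unfold addc; simpl. rewrite s; auto; lia.
      * apply (small_lt (exist _ (sh2 (proj1_sig t) (proj1_sig f 0)) (bound_sh2 _ _)) g'); auto.
        apply small_sh2.
    + destruct H.
    + unfold absF. destruct (sdec (proj1_sig g)) as [s|ns]; destruct (sdec (proj1_sig g')) as [s'|ns'].
      * simpl. destruct H as [i [H1 H2]]. exists i; split.
        -- unfold addc. destruct (Nat.eqb i 1); lia.
        -- intros j Hj. unfold addc. rewrite H2; auto.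
      * apply (small_lt (exist _ (addc c (proj1_sig g)) (bound_addc c g)) g'); auto.
        apply small_addc, s.
      * exfalso. apply (cnf_asym _ _ H). apply small_lt; auto.
      * exact H.
  - apply trich_sum2; [apply trich_prod; [apply trich_fin|apply trich_pow]|apply trich_oo].
  - apply asym_oo.
Qed.
End Absorb.

Lemma Ls_pos i k : (0 <= i)%Z -> Lsummand i k = copies k (omega_pow (Z.to_nat i + k)).
Proof. intros H. unfold Lsummand. rewrite (proj2 (Z.leb_le 0 i) H). reflexivity. Qed.

Lemma Ls_neg i k : (i < 0)%Z -> Lsummand i k = copies (Z.to_nat (- i) + k) (omega_pow k).
Proof. intros H. unfold Lsummand. rewrite (proj2 (Z.leb_gt 0 i) H). reflexivity. Qed.

Lemma L_generic i : iso (prodLO (L i) omega)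
  (sum2 (sumLO omega_star (fun j => prodLO (Lsummand i (S j)) omega)) omega_omega).
Proof.
  unfold L. eapply iso_trans; [apply prod_sum2|].
  apply sum2_cong; [apply prod_sumLO|apply oo_succ].
Qed.

Lemma copies_succ k n : iso (prodLO (copies k (omega_pow n)) omega) (copies k (omega_pow (S n))).
Proof.
  unfold copies. eapply iso_trans; [apply prod_assoc|].
  apply prod_cong; [apply iso_refl|apply pow_succ].
Qed.

Lemma L_succ i : iso (prodLO (L i) omega) (L (i + 1)).
Proof.
  eapply iso_trans; [apply L_generic|].
  destruct (Z_lt_le_dec i 0) as [Hn|Hp].
  - unfold L.
    eapply iso_trans; [|apply iso_sym; apply sum2_cong; [apply sumLO_split|apply iso_refl]].
    eapply iso_trans; [|apply iso_sym, sum2_assoc].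
    apply sum2_cong.
    + apply sumLO_cong; intros j. rewrite Ls_neg by lia.
      eapply iso_trans; [apply copies_succ|]. apply iso_eq.
      unfold Lsummand. destruct (Z.leb_spec 0 (i + 1)).
      * replace (Z.to_nat (i + 1)) with 0 by lia. replace (Z.to_nat (- i)) with 1 by lia. reflexivity.
      * replace (Z.to_nat (- i)) with (S (Z.to_nat (- (i + 1)))) by lia.
        rewrite Nat.add_succ_comm. reflexivity.
    + apply iso_sym. unfold Lsummand. destruct (Z.leb_spec 0 (i + 1)).
      * replace (Z.to_nat (i + 1)) with 0 by lia. apply absorb.
      * apply absorb.
  - unfold L. apply sum2_cong; [|apply iso_refl].
    apply sumLO_cong; intros j. rewrite Ls_pos by lia.
    eapply iso_trans; [apply copies_succ|]. apply iso_eq.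
    rewrite Ls_pos by lia.
    replace (Z.to_nat (i + 1)) with (S (Z.to_nat i)) by lia. reflexivity.
Qed.

Lemma shiftZ (N : Z -> LO) : iso (sumLO Zlo (fun m => N (m + 1)%Z)) (sumLO Zlo N).
Proof.
  apply (sumLO_reindex Zlo Zlo (fun m => (m + 1)%Z) (fun m => (m - 1)%Z) N).
  - intros; simpl; lia.
  - intros; simpl; lia.
  - intros; simpl; lia.
Qed.

Theorem mainTheorem6 :
  iso (prodLO I_even omega) I_odd /\
  iso (prodLO I_odd omega) I_even /\
  iso (prodLO I_all omega) I_all /\
  iso (prodLO I_even (omega_pow 2)) I_even /\
  iso (prodLO I_odd (omega_pow 2)) I_odd.
Proof.
  assert (H1 : iso (prodLO I_even omega) I_odd).
  { unfold I_even, I_odd. eapply iso_trans; [apply prod_sumLO|].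
    apply sumLO_cong; intros m. apply L_succ. }
  assert (H2 : iso (prodLO I_odd omega) I_even).
  { unfold I_even, I_odd. eapply iso_trans; [apply prod_sumLO|].
    eapply iso_trans; [|apply (shiftZ (fun m => L (2 * m)%Z))].
    apply sumLO_cong; intros m. eapply iso_trans; [apply L_succ|].
    apply iso_eq. f_equal. lia. }
  assert (H3 : iso (prodLO I_all omega) I_all).
  { unfold I_all. eapply iso_trans; [apply prod_sumLO|].
    eapply iso_trans; [|apply (shiftZ L)].
    apply sumLO_cong; intros m. apply L_succ. }
  split; [exact H1|]. split; [exact H2|]. split; [exact H3|]. split.
  - eapply iso_trans; [apply pow2_prod|].
    eapply iso_trans; [apply prod_cong; [exact H1|apply iso_refl]|exact H2].
  - eapply iso_trans; [apply pow2_prod|].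
    eapply iso_trans; [apply prod_cong; [exact H2|apply iso_refl]|exact H1].
Qed.
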